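(* Let $t$ and $l$ be positive integers with $l\ge 6$. There exists $k_0=k_0(t,l)$ such that for every $k\ge k_0$, whenever the edge set of $\widetilde O_{k+1}$ is partitioned into $t$ parts, the subgraph formed by one of the parts contains a cycle of length $2l$.
   Context: For positive integers $n\ge k+1$, the doubled Johnson graph $J(n;k,k+1)$ is the bipartite graph with vertex set $\binom{[n]}{k}\cup\binom{[n]}{k+1}$ (subsets of $[n]=\{1,\dots,n\}$), where two vertices $u,v$ are adjacent iff $u\subset v$ or $v\subset u$. The doubled Odd graph is $\widetilde O_{k+1}=J(2k+1;k,k+1)$. *)

(* Defs.v *)
From mathcomp Require Import all_boot.
Set Implicit Arguments. Unset Strict Implicit. Unset Printing Implicit Defensive.

Definition dj_vertex (n k : nat) (A : {set 'I_n}) : bool :=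
  (#|A| == k) || (#|A| == k.+1).

(* Adjacency in J(n;k,k+1): both vertices, and one properly contains the other
   (for vertices of sizes k,k+1 this is exactly u ⊂ v or v ⊂ u). *)
Definition dj_adj (n k : nat) (A B : {set 'I_n}) : bool :=
  [&& dj_vertex k A, dj_vertex k B & (A \proper B) || (B \proper A)].

(* An edge {A,B} is stored with its smaller endpoint first. *)
Definition dj_edge_key (n : nat) (A B : {set 'I_n}) : {set 'I_n} * {set 'I_n} :=
  if A \proper B then (A, B) else (B, A).

(* A t-partition of the edge set is a colouring of the (normalised) edges by
   'I_t. *)
Definition has_mono_cycle (m : nat) (n k t : nat)
  (c : {set 'I_n} * {set 'I_n} -> 'I_t) (i : 'I_t) : Prop :=
  exists v : 'I_m -> {set 'I_n},
    injective v /\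
    forall j : 'I_m, forall j' : 'I_m, j' = (j.+1 %% m) :> nat ->
      dj_adj k (v j) (v j') /\ c (dj_edge_key (v j) (v j')) = i.

(* Main.v *)
Require Import Defs.
From mathcomp Require Import all_boot zify.
From Stdlib Require Import FunctionalExtensionality.
Set Implicit Arguments. Unset Strict Implicit. Unset Printing Implicit Defensive.


Lemma sum_count_eq (T : finType) (f : nat -> T) (s : seq nat) :
  \sum_(c : T) count (fun z => f z == c) s = size s.
Proof.
elim: s => [|x s IH] /=; first by rewrite big1.
rewrite big_split /= IH (bigD1 (f x)) //= eqxx big1 ?addn0 //.
by move=> c /negPf; rewrite eq_sym => ->.
Qed.

Lemma pigeon (T : finType) (r : nat) (f : nat -> T) :
  exists (col : T) (h : nat -> nat),
    (forall x, x < r -> h x < r * #|T| + 1) /\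
    (forall x y, x < r -> y < r -> h x = h y -> x = y) /\
    (forall x, x < r -> f (h x) = col).
Proof.
set s := iota 0 (r * #|T| + 1).
have [col Hc] : exists col, r <= count (fun z => f z == col) s.
  case: (boolP [exists col, r <= count (fun z => f z == col) s]) => [/existsP //|/existsPn H].
  exfalso.
  have : \sum_(c : T) count (fun z => f z == c) s <= \sum_(c : T) r.-1.
    apply: leq_sum => c _; move: (H c); rewrite -ltnNge; lia.
  rewrite sum_count_eq size_iota sum_nat_const.
  have: #|T| * r.-1 <= r * #|T| by rewrite mulnC leq_mul2r leq_pred orbT.
  rewrite [#|xpredT|]cardT -cardE.
  lia.
exists col, (fun x => nth 0 (filter (fun z => f z == col) s) x).
have Hs : r <= size (filter (fun z => f z == col) s) by rewrite size_filter.
have Hu : uniq (filter (fun z => f z == col) s) by rewrite filter_uniq // iota_uniq.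
split; [|split].
- move=> x Hx; have := mem_nth 0 (leq_trans Hx Hs).
  by rewrite mem_filter mem_iota => /andP [_ /andP [_]].
- move=> x y Hx Hy E; apply/eqP; rewrite -(nth_uniq 0 _ _ Hu) ?E //.
  exact: leq_trans Hx Hs. exact: leq_trans Hy Hs.
- move=> x Hx; have := mem_nth 0 (leq_trans Hx Hs).
  by rewrite mem_filter => /andP [/eqP].
Qed.


Definition box_pt d (g : nat -> nat -> nat) (x : nat -> nat) : nat -> nat :=
  fun j => if j < d then g j (x j) else 0.

Lemma prod_ramsey d r : forall (T : finType), exists N, forall chi : (nat -> nat) -> T,
  exists (g : nat -> nat -> nat) (col : T),
   (forall j x, j < d -> x < r -> g j x < N) /\
   (forall j x y, j < d -> x < r -> y < r -> g j x = g j y -> x = y) /\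
   (forall x : nat -> nat, (forall j, j < d -> x j < r) -> chi (box_pt d g x) = col).
Proof.
elim: d => [|d IH] T.
  exists 1 => chi; exists (fun _ _ => 0), (chi (fun _ => 0)); split; [|split] => //.
set N0 := r * #|T| + 1.
have [N1 HN1] := IH {ffun 'I_N0 -> T}.
exists (maxn N1 N0) => chi.
pose pt (y : nat -> nat) (z : nat) := fun j => if j < d then y j else if j == d then z else 0.
pose chi' y := [ffun z : 'I_N0 => chi (pt y (val z))].
have [g1 [col1 [Hb1 [Hi1 Hc1]]]] := HN1 chi'.
have o0 : 'I_N0 by exists 0; rewrite /N0 addn1.
have [col [h [Hbh [Hih Hch]]]] := pigeon r (fun z => col1 (insubd o0 z)).
exists (fun j => if j < d then g1 j else h), col; split; [|split].
- move=> j x Hj Hx; case: ifP => Hjd.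
    by apply: leq_trans (Hb1 _ _ Hjd Hx) _; rewrite leq_maxl.
  by apply: leq_trans (Hbh _ Hx) _; rewrite leq_maxr.
- move=> j x y Hj Hx Hy; case: ifP => Hjd; first exact: Hi1.
  exact: Hih.
- move=> x Hx.
  have Hy : forall j, j < d -> x j < r by move=> j Hj; apply: Hx; lia.
  have E1 := Hc1 x Hy.
  have Hd := Hx d (ltnSn d).
  rewrite -(Hch _ Hd) -E1 /chi' ffunE insubdK; last by apply: Hbh.
  congr chi; apply: functional_extensionality => j.
  rewrite /pt /box_pt; case: (ltngtP j d) => Hjd.
  - by have -> : j < d.+1 by lia.
  - have -> : (j < d.+1) = false by lia.
    by [].
  - by rewrite Hjd ltnSn.
Qed.


Definition ta l q := if q <= l-4 then q - q %/ 2 else if q == l-3 then (l-4) - (l-4) %/ 2 else 0.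
Definition tb l q := if q <= l-4 then q %/ 2 else if q <= l-2 then (l-4) %/ 2 else 0.
Definition tc l q := if q <= l-4 then 0 else 1.
Definition tri l q : nat -> nat := fun m => if m == 0 then ta l q else if m == 1 then tb l q else tc l q.
Definition mq l q := if q == 0 then 2 else if q <= l-4 then (if q %% 2 == 1 then 0 else 1)
   else if q == l-3 then 2 else if q == l-2 then 0 else 1.

Ltac splitifs := repeat match goal with
  | |- context [if ?b then _ else _] => let H := fresh "H" in case: ifP => H
  | H0 : context [if ?b then _ else _] |- _ => let H := fresh "H" in case: ifP H0 => H H0
  end.

Lemma mq_lt3 l q : mq l q < 3.
Proof. rewrite /mq; splitifs => //. Qed.

Lemma tri_bound l q m : 6 <= l -> q < l -> tri l q m < l.
Proof. move=> *; rewrite /tri /ta /tb /tc; splitifs; lia. Qed.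

Lemma tri_inj l q q' : 6 <= l -> q < l -> q' < l ->
  (forall m, m < 3 -> tri l q m = tri l q' m) -> q = q'.
Proof.
move=> Hl Hq Hq2 H2.
have := H2 0 erefl; have := H2 1 erefl; have := H2 2 erefl.
rewrite /tri /ta /tb /tc /=; splitifs; lia.
Qed.

Lemma X_inj l q q' : 6 <= l -> q < l -> q' < l -> mq l q = mq l q' ->
  (forall m, m < 3 -> m != mq l q -> tri l q m = tri l q' m) -> q = q'.
Proof.
move=> Hl Hq Hq' E H.
have := H 0 erefl; have := H 1 erefl; have := H 2 erefl.
move: E; rewrite /tri /ta /tb /tc /mq /=; splitifs; lia.
Qed.

Lemma agree l q m : 6 <= l -> q < l -> m < 3 -> m != mq l ((q+1) %% l) ->
  tri l q m = tri l ((q+1) %% l) m.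
Proof.
move=> Hl Hq Hm.
have [E|E] : (q+1 = l /\ (q+1) %% l = 0) \/ (q+1 < l /\ (q+1) %% l = q+1).
  case: (ltngtP (q+1) l) => H; [right|lia|left]; split => //; [by rewrite modn_small|by rewrite H modnn].
all: case: E => E1 ->.
all: rewrite /tri /ta /tb /tc /mq /=; splitifs; lia.
Qed.


Definition sset n (s : seq nat) : {set 'I_n} := [set a : 'I_n | val a \in s].

Lemma card_sset n s : uniq s -> all (fun x => x < n) s -> #|sset n s| = size s.
Proof.
elim: s => [|x s IH] /=.
  move=> _ _; apply/eqP; rewrite cards_eq0; apply/eqP/setP => a; by rewrite !inE.
move=> /andP [Hx Hu] /andP [Hxn Ha].
have -> : sset n (x :: s) = (Ordinal Hxn) |: sset n s.
  by apply/setP => a; rewrite !inE -val_eqE.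
by rewrite cardsU1 IH // inE /= Hx.
Qed.

Definition coreL k d M := iota (d*M) (k.+1 - d).
Definition slotL M (y : nat -> nat) (js : seq nat) := map (fun j => j*M + y j) js.
Definition lst k d M y js := slotL M y js ++ coreL k d M.
Definition V k d M y js : {set 'I_(2*k+1)} := sset (2*k+1) (lst k d M y js).

Lemma slot_lt d M j x : j < d -> x < M -> j*M + x < d*M.
Proof. move=> Hj Hx; apply: (@leq_trans (j*M + M)); first by rewrite ltn_add2l.
by rewrite -mulSnr leq_mul2r Hj orbT. Qed.

Lemma slot_dec M j x j' x' : x < M -> x' < M -> j*M + x = j'*M + x' -> j = j' /\ x = x'.
Proof.
move=> Hx Hx' E.
have M0 : 0 < M by lia.
have E1 : (j*M + x) %/ M = (j'*M + x') %/ M by rewrite E.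
have E2 : (j*M + x) %% M = (j'*M + x') %% M by rewrite E.
rewrite !divnMDl // !divn_small // !addn0 in E1.
by rewrite !modnMDl !modn_small in E2.
Qed.

Section Sets.
Variables (k d M : nat) (HM : 0 < M) (HdM : d * M <= k).

Lemma mem_lst y js a : (forall j, j \in js -> j < d /\ y j < M) ->
  (a \in lst k d M y js) = 
  ((a < d*M) && [exists j : 'I_d, (val j \in js) && (a == val j * M + y j)]) || (d*M <= a < d*M + (k.+1 - d)).
Proof.
move=> Hjs; rewrite /lst mem_cat /coreL mem_iota; congr orb.
apply/mapP/andP.
  move=> [j Hj ->]; have [Hjd Hyj] := Hjs j Hj; split; first exact: slot_lt.
  by apply/existsP; exists (Ordinal Hjd); rewrite /= Hj eqxx.
move=> [_ /existsP [j /andP [Hj /eqP ->]]]; by exists (val j).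
Qed.

Lemma mem_slot y js j x : (forall j, j \in js -> j < d /\ y j < M) -> j < d -> x < M ->
  (j*M + x \in lst k d M y js) = (j \in js) && (y j == x).
Proof.
move=> Hjs Hj Hx; rewrite mem_lst //.
have Hl := slot_lt Hj Hx.
rewrite Hl /= (_ : (d * M <= j * M + x) = false) ?andbF ?orbF; last by lia.
apply/existsP/andP.
  move=> [j' /andP [Hj' /eqP E]]; have [Hj'd Hy] := Hjs _ Hj'.
  have [E1 E2] := slot_dec Hx Hy E; subst; by rewrite Hj' eqxx.
move=> [Hj' /eqP E]; exists (Ordinal Hj); by rewrite /= Hj' E eqxx.
Qed.

Lemma lst_uniq y js : uniq js -> (forall j, j \in js -> j < d /\ y j < M) -> uniq (lst k d M y js).
Proof.
move=> Hu Hjs; rewrite /lst cat_uniq /coreL iota_uniq andbT; apply/andP; split.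
  rewrite map_inj_in_uniq // => j j' Hj Hj' E.
  have [_ Hy] := Hjs _ Hj; have [_ Hy'] := Hjs _ Hj'.
  by have [] := slot_dec Hy Hy' E.
apply/hasPn => a; rewrite mem_iota => /andP [Ha _]; apply/mapP => [[j Hj E]].
have [Hjd Hy] := Hjs _ Hj; have := slot_lt Hjd Hy; lia.
Qed.

Lemma lst_bound y js : (forall j, j \in js -> j < d /\ y j < M) -> all (fun x => x < 2*k+1) (lst k d M y js).
Proof.
move=> Hjs; apply/allP => a; rewrite mem_lst // => /orP [/andP [Ha _]|Ha]; lia.
Qed.

Lemma card_V y js : uniq js -> (forall j, j \in js -> j < d /\ y j < M) ->
  #|V k d M y js| = size js + (k.+1 - d).
Proof.
move=> Hu Hjs; rewrite /V card_sset ?lst_uniq ?lst_bound //.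
by rewrite /lst size_cat size_map size_iota.
Qed.

Lemma sub_V y y' js js' : {subset js <= js'} -> (forall j, j \in js -> y j = y' j) ->
  V k d M y js \subset V k d M y' js'.
Proof.
move=> Hs Hy; apply/subsetP => a; rewrite !inE /lst !mem_cat => /orP [/mapP [j Hj ->]|->];
  last by rewrite orbT.
rewrite Hy //; apply/orP; left; apply/mapP; exists j => //; exact: Hs.
Qed.

Lemma eq_V y y' js : (forall j, j \in js -> y j = y' j) -> V k d M y js = V k d M y' js.
Proof.
move=> Hy; rewrite /V /lst /slotL; congr (sset _ (_ ++ _)).
by apply/eq_in_map => j Hj /=; rewrite Hy.
Qed.

End Sets.


Theorem theorem1p3 (t l : nat) (ht : 0 < t) (hl : 6 <= l) :
  exists k0 : nat, forall k : nat, k0 <= k ->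
    forall c : {set 'I_(2 * k + 1)} * {set 'I_(2 * k + 1)} -> 'I_t,
      exists i : 'I_t, has_mono_cycle (2 * l) k c i.
Proof.
set d := (3*t).+1.
have [N HN] := prod_ramsey d l {ffun 'I_d -> 'I_t}.
set M := N.+1.
exists (d*M + d) => k Hk c.
have HM : 0 < M by [].
have HdM : d*M <= k by lia.
have Hdk : d <= k.+1 by move: HdM; rewrite /M mulnS; lia.
pose Vs y js := V k d M y js.
pose chi (y : nat -> nat) : {ffun 'I_d -> 'I_t} :=
  [ffun j : 'I_d => c (Vs y (rem (val j) (iota 0 d)), Vs y (iota 0 d))].
have [g [F [Hgb [Hgi HF]]]] := HN chi.
have [i [h [Hhb [Hhi HhF]]]] := pigeon 3 (fun z => F (inord z)).
rewrite card_ord in Hhb.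
have Hhd : forall m, m < 3 -> h m < d by move=> m Hm; have := Hhb m Hm; rewrite /d; lia.
have Hhne : forall m m', m < 3 -> m' < 3 -> (h m == h m') = (m == m').
  move=> m m' Hm Hm'; apply/eqP/eqP => [E|->//]; exact: Hhi.
pose vec (tr : nat -> nat) : nat -> nat := fun j =>
  if j == h 0 then tr 0 else if j == h 1 then tr 1 else if j == h 2 then tr 2 else 0.
pose yy tr := box_pt d g (vec tr).
pose good tr := forall m, m < 3 -> tr m < l.
have Hvec : forall tr, good tr -> forall j, vec tr j < l.
  move=> tr Htr j; rewrite /vec; repeat case: ifP => _; try (apply: Htr; done); lia.
have Hyy : forall tr, good tr -> forall j, j < d -> yy tr j < M.
  move=> tr Htr j Hj; rewrite /yy /box_pt Hj; exact: ltnW (Hgb _ _ Hj (Hvec _ Htr j)).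
have Hyyh : forall tr m, m < 3 -> yy tr (h m) = g (h m) (tr m).
  move=> tr m Hm; rewrite /yy /box_pt Hhd // /vec.
  case: m Hm => [|[|[|]]] // _.
  - by rewrite eqxx.
  - by rewrite (Hhne 1 0) // eqxx.
  - by rewrite (Hhne 2 0) // (Hhne 2 1) // eqxx.
have Hjs : forall (tr : nat -> nat) (js : seq nat), good tr -> (forall j, j \in js -> j < d) ->
    forall j, j \in js -> j < d /\ yy tr j < M.
  move=> tr js Htr Hjs j Hj; have Hjd := Hjs j Hj; split => //; exact: Hyy.
have Hiota : forall j, j \in iota 0 d -> j < d by move=> j; rewrite mem_iota.
have Hrem : forall m j, j \in rem (h m) (iota 0 d) -> j < d.
  by move=> m j /mem_rem; apply: Hiota.
pose Yv tr := Vs (yy tr) (iota 0 d).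
pose Xv m tr := Vs (yy tr) (rem (h m) (iota 0 d)).
have cardY : forall tr, good tr -> #|Yv tr| = k.+1.
  move=> tr Htr; rewrite /Yv /Vs card_V ?iota_uniq ?size_iota //; first by lia.
  exact: Hjs.
have cardX : forall m tr, m < 3 -> good tr -> #|Xv m tr| = k.
  move=> m tr Hm Htr; rewrite /Xv /Vs card_V ?rem_uniq ?iota_uniq //.
    by rewrite size_rem ?size_iota ?mem_iota /= ?Hhd //; lia.
  by apply: Hjs => // j; apply: Hrem.
have Hslot : forall m x, m < 3 -> x < M -> h m * M + x < 2 * k + 1.
  move=> m x Hm Hx; have := slot_lt (Hhd m Hm) Hx; lia.
have Yinj : forall tr1 tr2, good tr1 -> good tr2 -> Yv tr1 = Yv tr2 ->
    forall m, m < 3 -> tr1 m = tr2 m.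
  move=> tr1 tr2 H1 H2 E m Hm.
  have Hx := Hyy _ H1 _ (Hhd m Hm).
  have : Ordinal (Hslot _ _ Hm Hx) \in Yv tr1.
    by rewrite inE /= (mem_slot HM HdM (Hjs tr1 _ H1 Hiota)) ?mem_iota /= ?Hhd ?eqxx.
  rewrite E inE /= (mem_slot HM HdM (Hjs tr2 _ H2 Hiota)) ?Hhd //.
  move=> /andP [_ /eqP]; rewrite !Hyyh // => Eg.
  symmetry; apply: (Hgi (h m) _ _ (Hhd m Hm) (H2 m Hm) (H1 m Hm) Eg).
have Xinj : forall m1 m2 tr1 tr2, m1 < 3 -> m2 < 3 -> good tr1 -> good tr2 -> Xv m1 tr1 = Xv m2 tr2 ->
    m1 = m2 /\ forall m, m < 3 -> m != m1 -> tr1 m = tr2 m.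
  move=> m1 m2 tr1 tr2 Hm1 Hm2 H1 H2 E.
  have key : forall m, m < 3 -> m != m1 -> m != m2 /\ tr1 m = tr2 m.
    move=> m Hm Hne.
    have Hx := Hyy _ H1 _ (Hhd m Hm).
    have : Ordinal (Hslot _ _ Hm Hx) \in Xv m1 tr1.
      rewrite inE /= (mem_slot HM HdM (Hjs tr1 _ H1 (Hrem m1))) ?Hhd //.
      by rewrite (mem_rem_uniq _ (iota_uniq _ _)) inE mem_iota /= Hhd // eqxx Hhne // Hne.
    rewrite E inE /= (mem_slot HM HdM (Hjs tr2 _ H2 (Hrem m2))) ?Hhd //.
    rewrite (mem_rem_uniq _ (iota_uniq _ _)) inE Hhne //.
    move=> /andP [/andP [Hne2 _] /eqP]; rewrite !Hyyh // => Eg; split => //.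
    symmetry; apply: (Hgi (h m) _ _ (Hhd m Hm) (H2 m Hm) (H1 m Hm) Eg).
  split; last by move=> m Hm Hne; case: (key m Hm Hne).
  apply/eqP; apply/negP => /negP Hne.
  have := key m2 Hm2; rewrite eq_sym => /(_ Hne) [/eqP]; done.
have adj : forall m tr, m < 3 -> good tr ->
    [/\ dj_adj k (Xv m tr) (Yv tr), dj_adj k (Yv tr) (Xv m tr),
        c (dj_edge_key (Xv m tr) (Yv tr)) = i & c (dj_edge_key (Yv tr) (Xv m tr)) = i].
  move=> m tr Hm Htr.
  have Hp : Xv m tr \proper Yv tr.
    rewrite properEcard cardX // cardY // ltnSn andbT.
    by apply: sub_V => // j /mem_rem.
  have Hp' : ~~ (Yv tr \proper Xv m tr).
    by rewrite properEcard cardX // cardY // ltnNge leqnSn andbF.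
  have Hc : c (Xv m tr, Yv tr) = i.
    rewrite -(HhF m Hm).
    have := HF (vec tr) (fun j _ => Hvec tr Htr j); rewrite -/(yy tr) => <-.
    rewrite /chi ffunE; have -> : \val (inord (h m) : 'I_d) = h m by apply: inordK; apply: Hhd.
    by [].
  have Hvx : dj_vertex k (Xv m tr) by rewrite /dj_vertex cardX // eqxx.
  have Hvy : dj_vertex k (Yv tr) by rewrite /dj_vertex cardY // eqxx orbT.
  split.
  - by rewrite /dj_adj Hvx Hvy Hp.
  - by rewrite /dj_adj Hvx Hvy Hp orbT.
  - by rewrite /dj_edge_key Hp.
  - by rewrite /dj_edge_key (negbTE Hp').
have vec_eq : forall tr tr' m0, m0 < 3 -> (forall m, m < 3 -> m != m0 -> tr m = tr' m) ->
    forall jj, jj != h m0 -> vec tr jj = vec tr' jj.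
  move=> tr tr' m0 Hm0 H jj Hjj; rewrite /vec.
  case: (jj =P h 0) => [E0|_].
    by move: Hjj; rewrite E0 Hhne // => Hn; apply: H.
  case: (jj =P h 1) => [E0|_].
    by move: Hjj; rewrite E0 Hhne // => Hn; apply: H.
  case: (jj =P h 2) => [E0|_] //.
  by move: Hjj; rewrite E0 Hhne // => Hn; apply: H.
exists i.
have goodtri : forall q, q < l -> good (tri l q) by move=> q Hq m Hm; apply: tri_bound.
have Hmq : forall q, mq l q < 3 := mq_lt3 l.
pose v (p : 'I_(2*l)) := if p %% 2 == 0 then Xv (mq l (p %/ 2)) (tri l (p %/ 2)) else Yv (tri l (p %/ 2)).
exists v; split.
  move=> p1 p2; rewrite /v.
  have Hq1 : p1 %/ 2 < l by have := ltn_ord p1; lia.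
  have Hq2 : p2 %/ 2 < l by have := ltn_ord p2; lia.
  case: ifP => E1; case: ifP => E2 => E.
  - have [Em Heq] := Xinj _ _ _ _ (Hmq _) (Hmq _) (goodtri _ Hq1) (goodtri _ Hq2) E.
    have := X_inj hl Hq1 Hq2 Em Heq => Eq; apply: ord_inj; move/eqP: E1 => E1; move/eqP: E2 => E2. lia.
  - by have := cardX _ _ (Hmq (p1 %/ 2)) (goodtri _ Hq1); rewrite E cardY; [move=> H; exfalso; lia | exact: goodtri].
  - by have := cardX _ _ (Hmq (p2 %/ 2)) (goodtri _ Hq2); rewrite -E cardY; [move=> H; exfalso; lia | exact: goodtri].
  - have := tri_inj hl Hq1 Hq2 (Yinj _ _ (goodtri _ Hq1) (goodtri _ Hq2) E) => Eq; apply: ord_inj.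
    move/negbT: E1; move/negbT: E2; lia.
move=> j j' Ej'.
have Hj := ltn_ord j.
have Hq : j %/ 2 < l by lia.
case: (boolP (j %% 2 == 0)) => Ej.
  have Ej2 : j' = j.+1 :> nat by rewrite Ej' modn_small; lia.
  rewrite /v Ej.
  have -> : (j' %% 2 == 0) = false by lia.
  have -> : j' %/ 2 = j %/ 2 by lia.
  by have [A1 A2 A3 A4] := adj _ _ (Hmq (j %/ 2)) (goodtri _ Hq).
have [Hj1 Hj2] : j' %/ 2 = (j %/ 2 + 1) %% l /\ j' %% 2 = 0.
  case: (ltngtP (j+1) (2*l)) => Hjl.
  - have -> : nat_of_ord j' = j + 1 by rewrite Ej' modn_small; lia.
    rewrite (modn_small (m := j %/ 2 + 1)); lia.
  - lia.
  - have -> : nat_of_ord j' = 0 by rewrite Ej' -addn1 Hjl modnn.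
    have -> : j %/ 2 + 1 = l by lia.
    by rewrite modnn.
rewrite /v (negbTE Ej) Hj1 Hj2 eqxx.
set qp := (j %/ 2 + 1) %% l.
have Hqp : qp < l by rewrite ltn_mod; lia.
have EX : Xv (mq l qp) (tri l qp) = Xv (mq l qp) (tri l (j %/ 2)).
  rewrite /Xv /Vs; apply: eq_V => jj Hjj.
  have Hne : jj != h (mq l qp).
    by move: Hjj; rewrite (mem_rem_uniq _ (iota_uniq _ _)) inE => /andP [].
  rewrite /yy /box_pt; case: ifP => // _; congr g.
  apply: (vec_eq _ _ _ (Hmq qp)) Hne => m Hm Hne'.
  by rewrite /qp -agree // /qp.
rewrite EX.
by have [A1 A2 A3 A4] := adj _ _ (Hmq qp) (goodtri _ Hq).
Qed.
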